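(* For all $n,d\in\mathbb N$, $$\mathbf c_n(\ell_\infty^d(\mathbb C))\ge\frac12\sqrt{\frac{d^n}{(24n)^d}}.$$
   Context: For a complex Banach space $X$ and $n\in\mathbb N$, $\mathbf c_n(X)$ is the smallest constant such that for all $\psi_1,\dots,\psi_n\in X^*$, $\|\psi_1\|\cdots\|\psi_n\|\le \mathbf c_n(X)\,\|\psi_1\cdots\psi_n\|$, where $\psi_1\cdots\psi_n$ is the pointwise product and $\|P\|=\sup_{\|x\|=1}|P(x)|$. $\ell_\infty^d(\mathbb C)$ is $\mathbb C^d$ with the sup norm. *)

(* Defs.v *)
From mathcomp Require Import all_boot all_order all_algebra.
From mathcomp Require Import complex.
From mathcomp Require Import all_classical all_reals.
Set Implicit Arguments. Unset Strict Implicit. Unset Printing Implicit Defensive.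
Import Order.TTheory GRing.Theory Num.Theory.
Local Open Scope ring_scope.
Local Open Scope classical_set_scope.

Definition cmod (R : realType) (z : R[i]) : R :=
  Num.sqrt (complex.Re z ^+ 2 + complex.Im z ^+ 2).

Definition supnorm (R : realType) (d : nat) (x : 'rV[R[i]]_d) : R :=
  \big[Num.max/0]_(j < d) cmod (x 0 j).

Definition fnorm (R : realType) (d : nat) (P : 'rV[R[i]]_d -> R[i]) : R :=
  sup [set cmod (P x) | x in [set x : 'rV[R[i]]_d | supnorm x = 1]].

(* psi is a (continuous: automatic in finite dimension) C-linear functional *)
Definition is_functional (R : realType) (d : nat) (psi : 'rV[R[i]]_d -> R[i]) :=
  forall (a : R[i]) (x y : 'rV[R[i]]_d), psi (a *: x + y) = a * psi x + psi y.

Definition cn_admissible (R : realType) (n d : nat) (C : R) :=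
  forall psi : 'I_n -> 'rV[R[i]]_d -> R[i],
    (forall k, is_functional (psi k)) ->
    \prod_(k < n) fnorm (psi k) <= C * fnorm (fun x => \prod_(k < n) psi k x).

Definition cn_linfty (R : realType) (n d : nat) : R :=
  inf [set C : R | cn_admissible n d C].

(* Main.v *)
Require Import Defs.
From mathcomp Require Import all_boot.

Lemma natineq (n d : nat) : 0 < n -> 0 < d ->
  d ^ n <= 4 * (24 * n) ^ d * (minn d n) ^ (minn d n * (n %/ minn d n)).
Proof.
move=> n0 d0; case: (leqP d n) => [dn|nd].
-
  set m := n %/ d; set r := n %% d.
  have -> : d ^ n = d ^ (d * m) * d ^ r by rewrite -expnD {1}(divn_eq n d) mulnC.
  rewrite [_ * d ^ (d * m)]mulnC leq_mul2l; apply/orP; right.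
  apply: (leq_trans (leq_pexp2l d0 (ltnW (ltn_pmod n d0)))).
  apply: (leq_trans _ (leq_pmull ((24*n)^d) (isT : 0 < 4))).
  rewrite leq_exp2r //; apply: (leq_trans dn); exact: leq_pmull.
-
  rewrite divnn n0 muln1.
  set q := d %/ n.
  have hd : d < q.+1 * n by rewrite mulSn {1}(divn_eq d n) -/q addnC ltn_add2r ltn_pmod.
  have h1 : d ^ n <= (q.+1) ^ n * n ^ n.
    by rewrite -expnMn leq_exp2r // ltnW.
  have h2 : q.+1 ^ n <= 2 ^ d.
    apply: (@leq_trans ((2 ^ q) ^ n)); first by rewrite leq_exp2r // ltn_expl.
    by rewrite -expnM leq_exp2l // leq_divM.
  have h3 : 2 ^ d <= (24 * n) ^ d by rewrite leq_exp2r // (leq_trans _ (leq_pmulr 24 n0)).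
  apply: (leq_trans h1); rewrite -mulnA; apply: (leq_trans _ (leq_pmull _ (isT : 0 < 4))).
  by rewrite leq_mul2r (leq_trans h2 h3) orbT.
Qed.

From mathcomp Require Import all_boot all_order all_algebra.
From mathcomp Require Import cyclic separable.
From mathcomp Require cyclotomic.
From mathcomp Require Import complex.
From mathcomp Require Import all_classical all_reals.
From mathcomp Require Import ring lra zify.
Import Order.TTheory GRing.Theory Num.Theory.

Local Open Scope ring_scope.

Lemma cmod_normc {R : realType} (z : R[i]) : cmod z = Normc.normc z.
Proof. by case: z. Qed.

Lemma cmod_ge0 {R : realType} (z : R[i]) : 0 <= cmod z.
Proof. exact: sqrtr_ge0. Qed.

Lemma cmodM {R : realType} (x y : R[i]) : cmod (x * y) = cmod x * cmod y.
Proof. by rewrite !cmod_normc Normc.normcM. Qed.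

Lemma cmodD {R : realType} (x y : R[i]) : cmod (x + y) <= cmod x + cmod y.
Proof. rewrite !cmod_normc; exact: le_normcD. Qed.

Lemma cmodE {R : realType} (z : R[i]) : ((cmod z)%:C)%C = `|z|.
Proof. by rewrite normc_def. Qed.

Lemma cmodC {R : realType} (c : R) : cmod ((c%:C)%C) = `|c|.
Proof. by rewrite /cmod /= expr0n /= addr0 sqrtr_sqr. Qed.

Lemma cmod1 {R : realType} : cmod (1 : R[i]) = 1.
Proof. by rewrite cmod_normc Normc.normc1. Qed.

Lemma cmod0 {R : realType} : cmod (0 : R[i]) = 0.
Proof. by rewrite cmod_normc Normc.normc0. Qed.

Lemma cmodN {R : realType} (z : R[i]) : cmod (- z) = cmod z.
Proof. by rewrite !cmod_normc normcN. Qed.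

Lemma cmod_nat {R : realType} (n : nat) : cmod (n%:R : R[i]) = n%:R.
Proof. by rewrite -(rmorph_nat (real_complex R)) cmodC normr_nat. Qed.

Lemma cmod_sum {R : realType} (I : Type) (r : seq I) (P : pred I) (F : I -> R[i]) :
  cmod (\sum_(i <- r | P i) F i) <= \sum_(i <- r | P i) cmod (F i).
Proof.
elim/big_rec2: _ => [|i y1 y2 _ h]; first by rewrite cmod0.
by rewrite (le_trans (cmodD (F i) y2 : _)) // lerD2l.
Qed.

Lemma cmod_prod {R : realType} (I : Type) (r : seq I) (P : pred I) (F : I -> R[i]) :
  cmod (\prod_(i <- r | P i) F i) = \prod_(i <- r | P i) cmod (F i).
Proof. exact: (big_morph _ cmodM cmod1). Qed.

Lemma supnorm_ge {R : realType} {d : nat} (x : 'rV[R[i]]_d) j :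
  cmod (x 0 j) <= supnorm x.
Proof. exact: le_bigmax. Qed.

Lemma supnorm_le {R : realType} {d : nat} (x : 'rV[R[i]]_d) (c : R) :
  0 <= c -> (forall j, cmod (x 0 j) <= c) -> supnorm x <= c.
Proof. by move=> c0 h; apply: bigmax_le. Qed.

Lemma supnorm_scale {R : realType} {d : nat} (x : 'rV[R[i]]_d) (c : R) :
  0 <= c -> supnorm ((c%:C)%C *: x) = c * supnorm x.
Proof.
move=> c0; rewrite /supnorm.
elim/big_rec2: _ => [|j y1 y2 _ ->]; first by rewrite mulr0.
by rewrite maxr_pMr // mxE cmodM cmodC ger0_norm.
Qed.

Lemma const_supnorm {R : realType} {d : nat} : (0 < d)%N ->
  supnorm (const_mx 1 : 'rV[R[i]]_d) = 1.
Proof.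
case: d => // d _; apply/eqP; rewrite eq_le supnorm_le ?ler01 //=.
  by rewrite (le_trans _ (supnorm_ge _ ord0)) // mxE cmod1.
by move=> j; rewrite mxE cmod1.
Qed.

Lemma fnorm_ge {R : realType} {d : nat} (P : 'rV[R[i]]_d -> R[i]) (B : R) x :
  (forall y, supnorm y = 1 -> cmod (P y) <= B) -> supnorm x = 1 ->
  cmod (P x) <= fnorm P.
Proof.
move=> hB hx; apply: ub_le_sup; last by exists x.
by exists B => _ [y hy <-]; exact: hB.
Qed.

Lemma fnorm_le {R : realType} {d : nat} (P : 'rV[R[i]]_d -> R[i]) (B : R) :
  (0 < d)%N -> (forall y, supnorm y = 1 -> cmod (P y) <= B) -> fnorm P <= B.
Proof.
move=> d0 hB; apply: ge_sup.
  by exists (cmod (P (const_mx 1))), (const_mx 1) => //; exact: const_supnorm.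
by move=> _ [y hy <-]; exact: hB.
Qed.

Lemma fnorm_ge0 {R : realType} {d : nat} (P : 'rV[R[i]]_d -> R[i]) :
  (0 < d)%N -> 0 <= fnorm P.
Proof.
move=> d0; rewrite /fnorm.
have [hs|hs] := pselect (has_sup [set cmod (P x) | x in [set x : 'rV[R[i]]_d | supnorm x = 1]]).
  apply: (le_trans (cmod_ge0 (P (const_mx 1)))).
  apply: sup_upper_bound => //; exists (const_mx 1) => //; exact: const_supnorm.
by rewrite sup_out.
Qed.

Lemma func0 {R : realType} {d : nat} (psi : 'rV[R[i]]_d -> R[i]) :
  is_functional psi -> psi 0 = 0.
Proof.
move=> h; have e := h 1 0 0; rewrite scale1r addr0 mul1r in e.
by apply: (addrI (psi 0)); rewrite addr0 -e.
Qed.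

Lemma funcD {R : realType} {d : nat} (psi : 'rV[R[i]]_d -> R[i]) x y :
  is_functional psi -> psi (x + y) = psi x + psi y.
Proof. by move=> h; have := h 1 x y; rewrite scale1r mul1r. Qed.

Lemma funcZ {R : realType} {d : nat} (psi : 'rV[R[i]]_d -> R[i]) a x :
  is_functional psi -> psi (a *: x) = a * psi x.
Proof. by move=> h; rewrite -[a *: x]addr0 h func0 // addr0. Qed.

Lemma func_repr {R : realType} {d : nat} (psi : 'rV[R[i]]_d -> R[i]) x :
  is_functional psi -> psi x = \sum_(j < d) x 0 j * psi (delta_mx 0 j).
Proof.
move=> h; rewrite {1}(row_sum_delta x).
elim/big_rec2: _ => [|j y1 y2 _ e]; first exact: func0.
by rewrite funcD // funcZ // e.
Qed.

Lemma func_bound {R : realType} {d : nat} (psi : 'rV[R[i]]_d -> R[i]) x (m : R) :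
  is_functional psi -> supnorm x <= 1 -> (forall j, cmod (psi (delta_mx 0 j)) <= m) ->
  cmod (psi x) <= d%:R * m.
Proof.
move=> h hx hm; rewrite func_repr //.
apply: le_trans (cmod_sum _ _ _ _) _.
rewrite mulr_natl -[d in m *+ d]card_ord -sumr_const; apply: ler_sum => j _.
rewrite cmodM -[m]mul1r; apply: ler_pM => //; try exact: cmod_ge0.
exact: le_trans (supnorm_ge _ _) hx.
Qed.

Definition pt {R : realType} {d N : nat} (g : {ffun 'I_d -> 'I_N}) : 'rV[R[i]]_d :=
  \row_j ((((g j).+1)%:R / N%:R : R)%:C)%C.

Lemma nat_diff_ge1 {R : realType} (a b : nat) : a != b -> 1 <= `|a%:R - b%:R : R|.
Proof.
move=> ab; have [lt|gt|eq] := ltngtP a b.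
- by rewrite distrC -natrB ?normr_nat ?ler1n ?subn_gt0 //; exact: ltnW.
- by rewrite -natrB ?normr_nat ?ler1n ?subn_gt0 //; exact: ltnW.
- by rewrite eq eqxx in ab.
Qed.

Lemma pt_unique {R : realType} {d N : nat} (psi : 'rV[R[i]]_d -> R[i]) (jk : 'I_d) (m : R)
  (g g' : {ffun 'I_d -> 'I_N}) :
  is_functional psi -> cmod (psi (delta_mx 0 jk)) = m ->
  cmod (psi (pt g)) < m / (2 * N%:R) -> cmod (psi (pt g')) < m / (2 * N%:R) ->
  (forall j, j != jk -> g j = g' j) -> g = g'.
Proof.
move=> hf hm hg hg' heq; apply/ffunP => j.
have [->|/heq //] := eqVneq j jk.
apply/eqP; apply/negPn/negP => ne.
have N0 : (0 < N)%N by apply: (leq_ltn_trans (leq0n _) (ltn_ord (g jk))).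
have e : psi (pt g) - psi (pt g') = ((pt g : 'rV[R[i]]_d) 0 jk - (pt g') 0 jk) * psi (delta_mx 0 jk).
  rewrite (func_repr psi (pt g)) // (func_repr psi (pt g')) // -sumrB (bigD1 jk) //= -mulrBl.
  rewrite big1 ?addr0 // => l /heq el; by rewrite !mxE el subrr.
have h1 : cmod (psi (pt g) - psi (pt g')) < m / N%:R.
  apply: le_lt_trans (cmodD _ _) _; rewrite cmodN.
  have -> : m / N%:R = m / (2 * N%:R) + m / (2 * N%:R).
    have : (N%:R : R) != 0 by rewrite pnatr_eq0 -lt0n.
    by move=> ?; field.
  exact: ltrD.
move: h1; rewrite e cmodM hm !mxE -rmorphB cmodC /= -mulrBl normrM.
rewrite normfV normr_nat.
have u1 := nat_diff_ge1 ((g jk).+1) ((g' jk).+1) ne.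
have m0 : 0 <= m by rewrite -hm cmod_ge0.
have w0 : 0 <= (N%:R : R)^-1 by rewrite invr_ge0 ler0n.
have wm : 0 <= (N%:R : R)^-1 * m by rewrite mulr_ge0.
rewrite [m / _]mulrC -mulrA ltNge => /negP; apply.
exact: ler_peMl.
Qed.

Lemma good_point {R : realType} {n d : nat} (psi : 'I_n -> 'rV[R[i]]_d -> R[i])
  (jk : 'I_n -> 'I_d) (m : 'I_n -> R) :
  (forall k, is_functional (psi k)) -> (forall k, cmod (psi k (delta_mx 0 (jk k))) = m k) ->
  exists g : {ffun 'I_d -> 'I_n.+1},
    forall k, m k / (2 * (n.+1)%:R) <= cmod (psi k (pt g)).
Proof.
move=> hf hm.
pose G := {ffun 'I_d -> 'I_n.+1}.
pose bad k := [set g : G | cmod (psi k (pt g)) < m k / (2 * (n.+1)%:R)].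
have cardB k : (#|bad k| * n.+1 <= #|G|)%N.
  pose f (p : G * 'I_n.+1) : G := [ffun j => if j == jk k then p.2 else p.1 j].
  have inj : {in finset.setX (bad k) [set: 'I_n.+1] &, injective f}.
    move=> [g i] [g' i'] /finset.setXP [hg _] /finset.setXP [hg' _] /= e.
    have ei : i = i' by have := congr1 (fun h : G => h (jk k)) e; rewrite !ffunE eqxx.
    congr pair => //.
    move: hg hg'; rewrite !inE => hg hg'.
    apply: (@pt_unique R d n.+1 (psi k) (jk k) (m k) g g' (hf k) (hm k) hg hg') => j nj.
    by have := congr1 (fun h : G => h j) e; rewrite !ffunE (negbTE nj).
  have -> : (#|bad k| * n.+1 = #|finset.setX (bad k) [set: 'I_n.+1]|)%N.
    by rewrite cardsX cardsT card_ord.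
  rewrite -(card_in_imset inj).
  exact: max_card.
have [g hg|none] := pickP [pred g : G | [forall k, g \notin bad k]].
  exists g => k; have := forallP hg k; rewrite inE -leNgt; done.
exfalso.
have cover : (#|G| <= \sum_(k < n) #|bad k|)%N.
  have -> : #|G| = (\sum_(g : G) 1)%N by rewrite sum1dep_card cardsT.
  have cE k : #|bad k| = (\sum_(g : G) (g \in bad k))%N.
    rewrite -[#|bad k|]cardsE -sum1dep_card big_mkcond /=.
    by apply: eq_bigr => g _; case: (g \in bad k).
  rewrite (eq_bigr _ (fun k _ => cE k)).
  rewrite exchange_big /=; apply: leq_sum => g _.
  have := none g; rewrite /= => /negbT; rewrite negb_forall => /existsP [k].
  rewrite negbK => hk; rewrite (bigD1 k) //= hk; exact: leq_addr.
have G0 : (0 < #|G|)%N by rewrite card_ffun expn_gt0 card_ord.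
have : (n.+1 * #|G| <= n * #|G|)%N.
  apply: (leq_trans (leq_mul (leqnn _) cover)).
  rewrite big_distrr /= -[X in (_ <= X * _)%N]card_ord -sum_nat_const.
  by apply: leq_sum => k _; rewrite mulnC.
by rewrite leq_pmul2r // ltnn.
Qed.

Lemma cn_nonempty {R : realType} (n d : nat) : (0 < d)%N ->
  cn_admissible (R:=R) n d (((2 * n.+1 * d)%:R) ^+ n).
Proof.
move=> d0 psi hf.
pose j0 : 'I_d := Ordinal d0.
pose F k j := cmod (psi k (delta_mx 0 j)).
pose jk k := [arg max_(j > j0) F k j]%O.
have hjk k l : F k l <= F k (jk k).
  by rewrite /jk; case: arg_maxP => // j _ h; exact: h.
pose m k := F k (jk k).
have m0 k : 0 <= m k by exact: cmod_ge0.
have [g hg] := @good_point R n d psi jk m hf (fun k => erefl (m k)).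
set x : 'rV[R[i]]_d := pt g.
have hnorm k : fnorm (psi k) <= d%:R * m k.
  apply: (fnorm_le _ _ d0) => z hz; apply: func_bound => //; first by rewrite hz.
  exact: hjk.
have hb z : supnorm z = 1 -> cmod (\prod_(k < n) psi k z) <= \prod_(k < n) (d%:R * m k).
  move=> hz; rewrite cmod_prod; apply: ler_prod => k _; rewrite cmod_ge0 /=.
  apply: func_bound => //; first by rewrite hz.
  exact: hjk.
have N0 : 0 < ((n.+1)%:R : R) by rewrite ltr0n.
have xj j : cmod (x 0 j) = ((g j).+1)%:R / (n.+1)%:R.
  by rewrite mxE cmodC ger0_norm // divr_ge0.
set s := supnorm x.
have s0 : 0 < s.
  apply: lt_le_trans (supnorm_ge x j0); rewrite xj divr_gt0 //.
have s1 : s <= 1.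
  apply: supnorm_le => // j; rewrite xj ler_pdivrMr // mul1r ler_nat; exact: ltn_ord.
pose y := ((s^-1)%:C)%C *: x.
have y1 : supnorm y = 1.
  by rewrite supnorm_scale ?mulVf ?gt_eqF // invr_ge0 ltW.
have Py : cmod (\prod_(k < n) psi k x) <= cmod (\prod_(k < n) psi k y).
  have -> : \prod_(k < n) psi k y = ((s^-1 ^+ n)%:C)%C * \prod_(k < n) psi k x.
    rewrite /y; under eq_bigr => k _ do rewrite funcZ //.
    by rewrite big_split /= prodr_const card_ord rmorphXn.
  rewrite cmodM cmodC ger0_norm; last by rewrite exprn_ge0 // invr_ge0 ltW.
  apply: ler_peMl; first exact: cmod_ge0.
  by apply: exprn_ege1; rewrite invf_ge1.
have hP : cmod (\prod_(k < n) psi k y) <= fnorm (fun z => \prod_(k < n) psi k z).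
  exact: (fnorm_ge _ _ _ hb y1).
have h1 : \prod_(k < n) fnorm (psi k) <= \prod_(k < n) (d%:R * m k).
  by apply: ler_prod => k _; rewrite fnorm_ge0 // hnorm.
apply: (le_trans h1).
have -> : \prod_(k < n) (d%:R * m k) =
    ((2 * n.+1 * d)%:R) ^+ n * \prod_(k < n) (m k / (2 * (n.+1)%:R)).
  rewrite -[n in _ ^+ n]card_ord -prodr_const -big_split /=.
  apply: eq_bigr => k _; rewrite !natrM; field; by rewrite nat1r pnatr_eq0.
rewrite ler_pM2l ?exprn_gt0 ?ltr0n ?muln_gt0 ?d0 //.
apply: (le_trans _ (le_trans Py hP)); rewrite cmod_prod.
apply: ler_prod => k _; rewrite divr_ge0 ?m0 ?mulr_ge0 ?ler0n //= hg.
Qed.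

Lemma prim_root_exists {R : realType} (n : nat) : (n > 0)%N ->
  exists z : R[i], n.-primitive_root z.
Proof.
pose p : {poly R[i]} := 'X^n - 1; have [r Dp] := closed_field_poly_normal p.
move=> n_gt0; rewrite (monicP _) ?monicXnsubC // scale1r in Dp.
have rn1: all n.-unity_root r by apply/allP=> z; rewrite -root_prod_XsubC -Dp.
have sz_r: (n < (size r).+1)%N.
  by rewrite -(size_prod_XsubC r id) -Dp size_XnsubC.
have [|z] := hasP (has_prim_root n_gt0 rn1 _ sz_r); last by exists z.
by rewrite -separable_prod_XsubC -Dp cyclotomic.separable_Xn_sub_1 // pnatr_eq0 -lt0n.
Qed.

Lemma cmodX {R : realType} (x : R[i]) k : cmod (x ^+ k) = cmod x ^+ k.
Proof. by elim: k => [|k ih]; rewrite ?expr0 ?cmod1 // !exprS cmodM ih. Qed.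

Lemma cmodE1 {R : realType} (x : R[i]) : `|x| = 1 -> cmod x = 1.
Proof. by rewrite -cmodE => /(congr1 (@complex.Re R)). Qed.

Lemma prim_norm1 {R : realType} (D : nat) (z : R[i]) : (0 < D)%N ->
  D.-primitive_root z -> `|z| = 1.
Proof.
move=> D0 pz; apply/eqP; rewrite -(pexpr_eq1 D0) ?normr_ge0 //.
by rewrite -normrX prim_expr_order // normr1.
Qed.

Lemma conj_inv1 {R : realType} (w : R[i]) : `|w| = 1 -> w * w^* = 1.
Proof. by move=> h; rewrite -normCK h expr1n. Qed.

Lemma orth {R : realType} (D : nat) (z : R[i]) (j l : nat) : (0 < D)%N ->
  D.-primitive_root z -> (j < D)%N -> (l < D)%N ->
  \sum_(s < D) z ^+ (j * s) * (z ^+ (l * s))^* = if j == l then D%:R else 0.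
Proof.
move=> D0 pz jD lD.
have n1 := prim_norm1 D z D0 pz.
pose w := z ^+ j * (z ^+ l)^*.
have -> : \sum_(s < D) z ^+ (j * s) * (z ^+ (l * s))^* = \sum_(s < D) w ^+ s.
  by apply: eq_bigr => s _; rewrite /w exprMn !exprM rmorphXn.
have zl1 : z ^+ l * (z ^+ l)^* = 1 by rewrite conj_inv1 // normrX n1 expr1n.
case: eqP => [e|ne].
  rewrite /w e zl1; under eq_bigr do rewrite expr1n; by rewrite sumr_const card_ord.
have w1 : w != 1.
  apply/eqP => hw; apply: ne; apply/eqP.
  have : z ^+ j == z ^+ l.
    by apply/eqP; rewrite -[z ^+ j]mulr1 -zl1 mulrCA -/w hw mulr1.
  by rewrite (eq_prim_root_expr pz) !modn_small.
have wD : w ^+ D = 1.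
  rewrite /w exprMn -rmorphXn -!exprM (mulnC j) (mulnC l) !exprM.
  by rewrite !(prim_expr_order pz) !expr1n rmorph1 mulr1.
have := subrX1 w D; rewrite wD subrr => /esym /eqP; rewrite mulf_eq0 subr_eq0 (negbTE w1) /=.
by move/eqP.
Qed.

Definition psiB {R : realType} {d D : nat} (hD : (D <= d)%N) (z : R[i]) (k : nat)
  (x : 'rV[R[i]]_d) : R[i] :=
  \sum_(j < D) z ^+ (j * k) * x 0 (widen_ord hD j).

Lemma psiB_lin {R : realType} {d D : nat} (hD : (D <= d)%N) (z : R[i]) k :
  is_functional (psiB hD z k).
Proof.
move=> a x y; rewrite /psiB mulr_sumr -big_split /=; apply: eq_bigr => j _.
by rewrite !mxE mulrDr mulrCA.
Qed.

Lemma psiB_bound {R : realType} {d D : nat} (hD : (D <= d)%N) (z : R[i]) k x :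
  `|z| = 1 -> supnorm x <= 1 -> cmod (psiB hD z k x) <= D%:R.
Proof.
move=> z1 hx; apply: le_trans (cmod_sum _ _ _ _) _.
rewrite -[X in _ <= X%:R]card_ord -sumr_const; apply: ler_sum => j _.
rewrite cmodM cmodX (cmodE1 z z1) expr1n mul1r.
exact: le_trans (supnorm_ge _ _) hx.
Qed.

Lemma psiB_per {R : realType} {d D : nat} (hD : (D <= d)%N) (z : R[i]) k x :
  D.-primitive_root z -> psiB hD z k x = psiB hD z (k %% D) x.
Proof.
move=> pz; apply: eq_bigr => j _.
by rewrite (mulnC j) (mulnC j) !exprM (prim_expr_mod pz).
Qed.

Lemma psiB_norm {R : realType} {d D : nat} (hD : (D <= d)%N) (z : R[i]) k :
  (0 < D)%N -> D.-primitive_root z -> D%:R <= fnorm (psiB hD z k).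
Proof.
move=> D0 pz; have z1 := prim_norm1 D z D0 pz.
have z0 : z != 0 by apply/eqP => z0; move: z1; rewrite z0 normr0 => /eqP; rewrite eq_sym oner_eq0.
pose v : 'rV[R[i]]_d := \row_j (if (j < D)%N then (z ^+ (j * k))^-1 else 0).
have hv : supnorm v = 1.
  apply/eqP; rewrite eq_le; apply/andP; split.
    apply: supnorm_le => // j; rewrite mxE; case: ifP => _; last by rewrite cmod0.
    by rewrite cmod_normc Normc.normcV -cmod_normc cmodX (cmodE1 z z1) expr1n invr1.
  have -> : 1 = cmod (v 0 (widen_ord hD (Ordinal D0))).
    by rewrite mxE /= D0 mul0n expr0 invr1 cmod1.
  exact: supnorm_ge.
have -> : D%:R = cmod (psiB hD z k v).
  rewrite /psiB (eq_bigr (fun _ => 1)); first by rewrite sumr_const card_ord cmod_nat.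
  move=> j _; rewrite mxE /= ltn_ord mulfV // expf_neq0 //.
apply: (fnorm_ge _ D%:R) => // y hy; apply: psiB_bound => //; by rewrite hy.
Qed.

Lemma sqC {R : realType} (w : R[i]) : (((cmod w ^+ 2)%:C)%C : R[i]) = w * w^*.
Proof. by rewrite rmorphXn /= cmodE normCK. Qed.

Lemma psiB_pars {R : realType} {d D : nat} (hD : (D <= d)%N) (z : R[i]) x :
  (0 < D)%N -> D.-primitive_root z ->
  \sum_(s < D) cmod (psiB hD z s x) ^+ 2 =
  D%:R * \sum_(j < D) cmod (x 0 (widen_ord hD j)) ^+ 2.
Proof.
move=> D0 pz.
suff h : (((\sum_(s < D) cmod (psiB hD z s x) ^+ 2)%:C)%C : R[i]) =
  ((D%:R * \sum_(j < D) cmod (x 0 (widen_ord hD j)) ^+ 2)%:C)%C.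
  by move/(congr1 (@complex.Re R)): h.
rewrite rmorphM rmorph_nat !rmorph_sum /=.
under eq_bigr do rewrite sqC.
under [in RHS]eq_bigr do rewrite sqC.
rewrite /psiB.
under eq_bigr do rewrite rmorph_sum big_distrlr /=.
rewrite exchange_big /=.
under eq_bigr do rewrite exchange_big /=.
rewrite mulr_sumr; apply: eq_bigr => j _.
have e (l : 'I_D) : \sum_(s < D) (z ^+ (j * s) * x 0 (widen_ord hD j)) * (z ^+ (l * s) * x 0 (widen_ord hD l))^*
   = (x 0 (widen_ord hD j) * (x 0 (widen_ord hD l))^*) * \sum_(s < D) z ^+ (j * s) * (z ^+ (l * s))^*.
  rewrite mulr_sumr; apply: eq_bigr => s _; rewrite rmorphM mulrACA mulrC //.
under eq_bigr do rewrite e.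
rewrite (bigD1 j) //= orth // eqxx big1 ?addr0.
  by rewrite mulrC.
move=> l nl; rewrite orth //; case: eqP => [/val_inj e'|]; last by rewrite mulr0.
by rewrite e' eqxx in nl.
Qed.

Lemma block_bound {R : realType} {d D : nat} (hD : (D <= d)%N) (z : R[i]) x :
  (0 < D)%N -> D.-primitive_root z -> supnorm x <= 1 ->
  \prod_(s < D) cmod (psiB hD z s x) ^+ 2 <= D%:R ^+ D.
Proof.
move=> D0 pz hx.
have z1 := prim_norm1 D z D0 pz.
pose E (s : 'I_D) := cmod (psiB hD z s x) ^+ 2.
have h0 : {in predT, forall i : 'I_D, 0 <= E i} by move=> i _; exact: sqr_ge0.
have hA := (@leif_AGM R 'I_D predT E h0).1.
have cT : #|predT : {pred 'I_D}| = D by rewrite cardT size_enum_ord.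
move: hA; rewrite /= cT => hA.
apply: le_trans hA _.
have -> : \sum_(i in predT) E i = \sum_(i < D) E i by [].
rewrite /E psiB_pars // mulrAC divff ?mul1r ?pnatr_eq0 -?lt0n //.
have hS : \sum_(j < D) cmod (x 0 (widen_ord hD j)) ^+ 2 <= D%:R.
  rewrite -[X in _ <= X%:R]card_ord -sumr_const; apply: ler_sum => j _.
  rewrite expr_le1 ?cmod_ge0 //; exact: le_trans (supnorm_ge _ _) hx.
apply: lerXn2r => //; rewrite nnegrE ?ler0n //.
by apply: sumr_ge0 => j _; exact: sqr_ge0.
Qed.

Lemma powle {R : realType} (x y : R) (k : nat) : 0 <= x -> x <= y -> x ^+ k <= y ^+ k.
Proof. by move=> hx hxy; rewrite lerXn2r // nnegrE // (le_trans hx hxy). Qed.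

Lemma blocks {R : realType} (D : nat) (f : nat -> R) (m : nat) :
  (forall k, f k = f (k %% D)%N) ->
  \prod_(0 <= k < m * D) f k = (\prod_(s < D) f s) ^+ m.
Proof.
move=> hf; elim: m => [|m ih]; first by rewrite mul0n big_geq ?expr0.
rewrite mulSn addnC (big_cat_nat _ (leq_addr _ _)) //= ih exprSr; congr (_ * _).
rewrite -{1}[(m * D)%N]add0n big_addn addKn big_mkord; apply: eq_bigr => s _.
by rewrite hf addnC modnMDl -hf.
Qed.

Lemma prod_bound {R : realType} {d D : nat} (hD : (D <= d)%N) (z : R[i]) x (n : nat) :
  (0 < D)%N -> D.-primitive_root z -> supnorm x <= 1 ->
  (\prod_(k < n) cmod (psiB hD z k x)) ^+ 2 <= D%:R ^+ (D * (n %/ D) + 2 * (n %% D))%N.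
Proof.
move=> D0 pz hx.
have z1 := prim_norm1 D z D0 pz.
pose f k := cmod (psiB hD z k x).
have hf k : f k = f (k %% D)%N by rewrite /f (psiB_per _ _ _ _ pz).
set m := (n %/ D)%N; set r := (n %% D)%N.
have hn : n = (m * D + r)%N by rewrite /m /r -divn_eq.
rewrite -(big_mkord xpredT f) (@big_cat_nat _ _ _ (m * D)%N 0 n) //=; last by rewrite hn leq_addr.
rewrite blocks // exprMn -exprM.
have f0 k : 0 <= f k by exact: cmod_ge0.
have hr : \prod_(m * D <= k < n) f k <= D%:R ^+ r.
  rewrite -[r](addKn (m * D)) -hn -prodr_const_nat; apply: ler_prod => k _.
  by rewrite f0 /f psiB_bound.
rewrite exprD; apply: ler_pM.
- by rewrite exprn_ge0 // prodr_ge0.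
- by rewrite exprn_ge0 // prodr_ge0.
- have -> : (\prod_(i < D) f i) ^+ (m * 2) = (\prod_(i < D) f i ^+ 2) ^+ m by rewrite prodrXl -exprM mulnC.
  rewrite exprM; apply: powle; first by rewrite prodr_ge0 // => i _; exact: sqr_ge0.
  exact: block_bound.
- rewrite (mulnC 2 r) exprM; apply: powle => //; by rewrite prodr_ge0.
Qed.

Lemma le_sqrt {R : realType} (a b : R) : 0 <= a -> a ^+ 2 <= b -> a <= Num.sqrt b.
Proof.
move=> a0 h; rewrite -(ger0_norm a0) -sqrtr_sqr ler_sqrt //.
exact: le_trans (sqr_ge0 a) h.
Qed.

Theorem proposition3p1 (R : realType) (n d : nat) (hn : (1 <= n)%N) (hd : (1 <= d)%N) :
  2^-1 * Num.sqrt ((d%:R ^+ n) / ((24 * n)%:R ^+ d)) <= cn_linfty R n d.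
Proof.
apply: lb_le_inf.
  by exists (((2 * n.+1 * d)%:R) ^+ n); exact: cn_nonempty.
move=> C hC.
pose D := minn d n.
have hD : (D <= d)%N by exact: geq_minl.
have D0 : (0 < D)%N by rewrite leq_min hn hd.
have [z pz] := @prim_root_exists R D D0.
pose psi (k : 'I_n) := psiB hD z k.
have := hC psi (fun k => psiB_lin hD z k).
set Pn := fnorm _.
pose m := (n %/ D)%N; pose r := (n %% D)%N.
pose U : R := Num.sqrt (D%:R ^+ (D * m + 2 * r)%N).
have z1 := prim_norm1 D z D0 pz.
have LB : D%:R ^+ n <= \prod_(k < n) fnorm (psi k).
  rewrite -[X in _ ^+ X]card_ord -prodr_const; apply: ler_prod => k _.
  by rewrite ler0n psiB_norm.
have UB : Pn <= U.
  apply: fnorm_le; first by rewrite (leq_trans D0).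
  move=> y hy; rewrite cmod_prod; apply: le_sqrt; first by rewrite prodr_ge0 // => k _; exact: cmod_ge0.
  by apply: prod_bound => //; rewrite hy.
have P0 : 0 <= Pn by apply: fnorm_ge0; rewrite (leq_trans D0).
move=> hCP; have hP := le_trans LB hCP.
have Dn0 : 0 < D%:R ^+ n :> R by rewrite exprn_gt0 // ltr0n.
have C0 : 0 <= C.
  rewrite leNgt; apply/negP => Cn.
  have : C * Pn <= 0 by rewrite mulr_le0_ge0 // ltW.
  by move=> h; move: (le_trans hP h); rewrite leNgt Dn0.
have U0 : 0 < U by rewrite sqrtr_gt0 exprn_gt0 // ltr0n.
have hCU : D%:R ^+ n <= C * U := le_trans hP (ler_wpM2l C0 UB).
rewrite -(ler_pM2r U0) (le_trans _ hCU) //.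
have ni := natineq n d hn hd; rewrite -/D -/m in ni.
have e2 : (D * m + (D * m + 2 * r) = 2 * n)%N.
  have := divn_eq n D; rewrite -/m -/r; lia.
have K0 : 0 < (24 * n)%:R ^+ d :> R by rewrite exprn_gt0 // ltr0n muln_gt0 hn.
have X0 : 0 <= (d%:R ^+ n / (24 * n)%:R ^+ d : R).
  by apply: divr_ge0; [apply: exprn_ge0; exact: ler0n | exact: ltW].
rewrite -mulrA -sqrtrM // ler_pdivrMl ?ltr0n //.
rewrite -[X in _ <= X](ger0_norm (_ : 0 <= 2 * D%:R ^+ n)); last by rewrite mulr_ge0 // ltW.
rewrite -sqrtr_sqr ler_sqrt; last exact: sqr_ge0.
rewrite mulrAC ler_pdivrMr // exprMn -exprM.
rewrite -!natrX -!natrM ler_nat.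
have := leq_mul ni (leqnn (D ^ (D * m + 2 * r))).
move=> h; apply: (leq_trans h); rewrite (mulnC n 2) -e2 expnD; apply: eq_leq.
set A := ((24 * n) ^ d)%N; set B := (D ^ (D * m))%N; set Cc := (D ^ (D * m + 2 * r))%N.
rewrite (_ : (2 ^ 2 = 4)%N) // !expnD -/B [RHS]mulnC !mulnA.
by rewrite (mulnC A).
Qed.
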